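(* Let $\mathfrak{g}$ be a complex simply-laced symmetrizable Kac–Moody algebra with index set $I$ and Cartan matrix $(a_{i,j})$, and let $\lambda$ be a dominant integral weight. Let $(i_1,\ldots,i_t)\in I^t$ with $i_p\ne i_q$ for $p\ne q$, and let $b_1,\ldots,b_t$ be nonnegative integers such that $x=f_{i_1}^{b_1}\cdots f_{i_t}^{b_t}\pi_\lambda\neq 0$. Then for every $1\le r\le t$, \[ \epsilon_{i_r}(x)=\max\Big\{0,\ b_r+\sum_{s<r} b_s a_{i_s,i_r}\Big\}, \] and $\epsilon_j(x)=0$ for every $j\in I\setminus\{i_1,\ldots,i_t\}$.
   Context: Simply laced: $a_{i,i}=2$, $a_{i,j}\in\{0,-1\}$ for $i\neq j$. $B(\lambda)$ is Kashiwara's crystal of $V(\lambda)$ with operators $e_i,f_i$ (valued in $B(\lambda)\sqcup\{0\}$) and $\epsilon_i(\pi)=\max\{n\ge0: e_i^n\pi\neq0\}$; $\pi_\lambda$ is its highest weight element. The monomial means $f_{i_t}^{b_t}$ is applied first. *)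

(* Defs.v *)
From HB Require Import structures.
From mathcomp Require Import all_boot all_order all_algebra.
From mathcomp Require Import boolp classical_sets reals.
Set Implicit Arguments. Unset Strict Implicit. Unset Printing Implicit Defensive.
Import Order.TTheory GRing.Theory Num.Theory.
Local Open Scope ring_scope.
Local Open Scope classical_set_scope.

Definition simply_laced_symmetrizable_GCM (I : finType) (A : I -> I -> int) :
  Prop :=
  [/\ forall i, A i i = 2,
      forall i j, i != j -> A i j = 0 \/ A i j = -1,
      forall i j, A i j = 0 -> A j i = 0 &
      exists d : I -> rat, (forall i, 0 < d i) /\
        forall i j, d i * (A i j)%:~R = d j * (A j i)%:~R].

(* A realization of the (real) weight space: h*_R = R^(I + I).               *)
(* The coroot alpha_j^vee is the coordinate functional at (inl j);           *)
(* the simple root alpha_i has coordinates (a_{j,i})_j on the inl part and   *)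
(* the unit vector e_i on the inr part (so the alpha_i are independent and   *)
(* <alpha_i, alpha_j^vee> = a_{j,i}).                                        *)
Definition weight (I : finType) (R : realType) := I + I -> R.

Definition pairing (I : finType) (R : realType) (j : I) (v : weight I R) : R :=
  v (inl j).

Definition sroot (I : finType) (R : realType) (A : I -> I -> int) (i : I)
  : weight I R :=
  fun k => match k with inl j => (A j i)%:~R | inr j => (j == i)%:R end.

Definition wadd (I : finType) (R : realType) (u v : weight I R) : weight I R :=
  fun k => u k + v k.
Definition wsub (I : finType) (R : realType) (u v : weight I R) : weight I R :=
  fun k => u k - v k.

Definition sreflect (I : finType) (R : realType) (A : I -> I -> int) (i : I)
  (v : weight I R) : weight I R :=
  fun k => v k - pairing i v * sroot R A i k.

(* Littelmann paths and root operators (Littelmann, Paths and root         *)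
(* operators, Ann. Math. 1995).  A path is a map pi : R -> h*_R (only its   *)
(* restriction to [0,1] matters; the formulas below are applied for all t). *)
Definition lspath (I : finType) (R : realType) := R -> weight I R.

Definition hfun (I : finType) (R : realType) (i : I) (p : lspath I R) (t : R) : R :=
  pairing i (p t).

Definition hmin (I : finType) (R : realType) (i : I) (p : lspath I R) : R :=
  inf [set y | exists t, 0 <= t <= 1 /\ y = hfun i p t].

(* f_i : None plays the role of 0 *)
Definition rootf (I : finType) (R : realType) (A : I -> I -> int) (i : I)
  (p : lspath I R) : option (lspath I R) :=
  let h := hfun i p in
  let m := hmin i p in
  if h 1 - m < 1 then None else
  let q := sup [set t | 0 <= t <= 1 /\ h t = m] in
  let x := inf [set t | q <= t <= 1 /\ h t = m + 1] in
  Some (fun t =>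
    if t <= q then p t
    else if t <= x then wadd (p q) (sreflect A i (wsub (p t) (p q)))
    else wsub (p t) (sroot R A i)).

Definition roote (I : finType) (R : realType) (A : I -> I -> int) (i : I)
  (p : lspath I R) : option (lspath I R) :=
  let h := hfun i p in
  let m := hmin i p in
  if m > -1 then None else
  let t1 := inf [set t | 0 <= t <= 1 /\ h t = m] in
  let t0 := sup [set t | 0 <= t <= t1 /\ h t >= m + 1] in
  Some (fun t =>
    if t <= t0 then p t
    else if t <= t1 then wadd (p t0) (sreflect A i (wsub (p t) (p t0)))
    else wadd (p t) (sroot R A i)).

Definition fpow (I : finType) (R : realType) (A : I -> I -> int) (i : I)
  (n : nat) (o : option (lspath I R)) : option (lspath I R) :=
  iter n (fun o => obind (rootf A i) o) o.
Definition epow (I : finType) (R : realType) (A : I -> I -> int) (i : I)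
  (n : nat) (o : option (lspath I R)) : option (lspath I R) :=
  iter n (fun o => obind (roote A i) o) o.

Definition epsilon_is (I : finType) (R : realType) (A : I -> I -> int) (i : I)
  (p : lspath I R) (k : int) : Prop :=
  exists n : nat, n%:Z = k /\
    epow A i n (Some p) <> None /\ epow A i n.+1 (Some p) = None.

(* highest weight path pi_lambda(t) = t lambda, for the dominant integral   *)
(* weight lambda = sum_j lambda_j Lambda_j (Lambda_j the fundamental weight  *)
(* with <Lambda_j, alpha_k^vee> = delta_jk and zero inr-part).              *)
Definition pi_hw (I : finType) (R : realType) (lam : I -> nat) : lspath I R :=
  fun t k => match k with inl j => t * (lam j)%:R | inr _ => 0 end.

(* f_{i_1}^{b_1} ... f_{i_t}^{b_t} pi_lambda  (f_{i_t}^{b_t} applied first) *)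
Definition monomial (I : finType) (R : realType) (A : I -> I -> int)
  (lam : I -> nat) (t : nat) (ii : 'I_t -> I) (b : 'I_t -> nat)
  : option (lspath I R) :=
  foldr (fun r o => fpow A (ii r) (b r) o) (Some (@pi_hw I R lam)) (enum 'I_t).

(* Main.v *)
Require Import Defs.
From HB Require Import structures.
From mathcomp Require Import all_boot all_order all_algebra.
From mathcomp Require Import boolp classical_sets reals.
From mathcomp Require Import ring lra.
Import Order.TTheory GRing.Theory Num.Theory.
Local Open Scope ring_scope.
Local Open Scope classical_set_scope.
Set Implicit Arguments. Unset Strict Implicit.

Section RealLemmas.
Variable R : realType.

Definition MLip (H : R -> R) := exists L : R, 0 <= L /\
  forall s u, 0 <= s -> s <= u -> u <= 1 -> H s <= H u /\ H u - H s <= L * (u - s).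

Lemma sup_le_lem (S : set R) (H : R -> R) (c : R) : MLip H ->
  (forall u, S u -> 0 <= u <= 1 /\ H u <= c) -> S !=set0 ->
  (0 <= sup S <= 1) /\ H (sup S) <= c.
Proof.
move=> [L [L0 HL]] HS [s0 Ss0].
have hs : has_sup S.
  split; first by exists s0.
  by exists 1 => u /HS [/andP[_ ?] _].
have ub := sup_upper_bound hs.
have s0le : s0 <= sup S by apply: ub.
have [/andP[s00 s01] _] := HS _ Ss0.
have le1 : sup S <= 1 by apply: ge_sup; [exists s0 | move=> u /HS [/andP[_ ?] _]].
have ge0 : 0 <= sup S by apply: le_trans s0le.
split; first by rewrite ge0 le1.
apply/ler_addgt0Pr => e e0.
have eps0 : 0 < e / (L + 1) by apply: divr_gt0 => //; lra.
have [s Ss hs'] := sup_adherent eps0 hs.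
have sle : s <= sup S by apply: ub.
have [/andP[s_0 _] Hsc] := HS _ Ss.
have [_ HL2] := HL s (sup S) s_0 sle le1.
have ee : e / (L + 1) * (L + 1) = e by rewrite divfK //; apply/lt0r_neq0; lra.
have : L * (sup S - s) <= L * (e / (L+1)) by apply: ler_wpM2l => //; lra.
nra.
Qed.

Lemma inf_ge_lem (S : set R) (H : R -> R) (c : R) : MLip H ->
  (forall u, S u -> 0 <= u <= 1 /\ c <= H u) -> S !=set0 ->
  (0 <= inf S <= 1) /\ c <= H (inf S).
Proof.
move=> [L [L0 HL]] HS [s0 Ss0].
have hs : has_inf S.
  split; first by exists s0.
  by exists 0 => u /HS [/andP[? _] _].
have lb := ge_inf hs.2.
have s0le : inf S <= s0 by apply: lb.
have [/andP[s00 s01] _] := HS _ Ss0.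
have ge0 : 0 <= inf S by apply: lb_le_inf; [exists s0 | move=> u /HS [/andP[? _] _]].
have le1 : inf S <= 1 by apply: le_trans s0le _.
split; first by rewrite ge0 le1.
apply/ler_addgt0Pr => e e0.
have eps0 : 0 < e / (L + 1) by apply: divr_gt0 => //; lra.
have [s Ss hs'] := inf_adherent eps0 hs.
have sle : inf S <= s by apply: lb.
have [/andP[_ s_1] Hsc] := HS _ Ss.
have [_ HL2] := HL (inf S) s ge0 sle s_1.
have ee : e / (L + 1) * (L + 1) = e by rewrite divfK //; apply/lt0r_neq0; lra.
have : L * (s - inf S) <= L * (e / (L+1)) by apply: ler_wpM2l => //; lra.
nra.
Qed.

Lemma sup_right_lem (S : set R) (H : R -> R) (c e : R) : MLip H ->
  0 <= e <= 1 -> H 0 <= c -> c <= H e ->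
  (forall u, S u <-> (0 <= u <= e /\ H u <= c)) ->
  (0 <= sup S <= e) /\ H (sup S) = c.
Proof.
move=> HM /andP[e0 e1] H0 He HS.
have S0 : S 0 by apply/HS; rewrite lexx e0.
have [/andP[q0 q1] Hq] : (0 <= sup S <= 1) /\ H (sup S) <= c.
  apply: sup_le_lem => //; last by exists 0.
  by move=> u /HS [/andP[u0 ue] Hu]; rewrite u0 /= Hu (le_trans ue e1).
have hs : has_sup S.
  split; first by exists 0.
  by exists 1 => u /HS [/andP[_ ?] _]; lra.
have qe : sup S <= e by apply: ge_sup; [exists 0 | move=> u /HS [/andP[_ ?] _]].
split; first by rewrite q0 qe.
apply/eqP; rewrite eq_le Hq /=.
have [->//|qlt] := eqVneq (sup S) e.
have qlt' : sup S < e by rewrite lt_neqAle qlt qe.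
rewrite leNgt; apply/negP => Hlt.
case: HM => L [L0 HL].
pose d := c - H (sup S).
have d0 : 0 < d by rewrite /d; lra.
pose eta := Num.min (e - sup S) (d / (L + 1)).
have eta0 : 0 < eta by rewrite /eta lt_min; apply/andP; split; [lra | apply: divr_gt0 => //; lra].
have etale : eta <= e - sup S by rewrite /eta ge_min lexx.
have etale2 : eta <= d / (L+1) by rewrite /eta ge_min lexx orbT.
have ee : d / (L + 1) * (L + 1) = d by rewrite divfK //; apply/lt0r_neq0; lra.
have [_ HL2] := HL (sup S) (sup S + eta) q0 ltac:(lra) ltac:(lra).
have : L * eta <= L * (d / (L+1)) by apply: ler_wpM2l.
move=> Leta.
have Sin : S (sup S + eta).
  apply/HS; split; first by apply/andP; split; lra.
  rewrite /d in d0 ee Leta; nra.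
have := sup_upper_bound hs Sin; lra.
Qed.

Lemma inf_img_eq (h : R -> R) (v : R) :
  (forall u, 0 <= u <= 1 -> v <= h u) -> (exists u, 0 <= u <= 1 /\ h u = v) ->
  inf [set y | exists u, 0 <= u <= 1 /\ y = h u] = v.
Proof.
move=> lbv [u0 [u01 hu0]].
have ne : [set y | exists u, 0 <= u <= 1 /\ y = h u] !=set0 by exists (h u0); exists u0.
apply/eqP; rewrite eq_le; apply/andP; split.
  rewrite -hu0; apply: ge_inf; first by exists v => y [u [? ->]]; apply: lbv.
  by exists u0.
by apply: lb_le_inf => // y [u [? ->]]; apply: lbv.
Qed.

Lemma inf_img_ge (h : R -> R) (v : R) :
  (forall u, 0 <= u <= 1 -> v <= h u) ->
  v <= inf [set y | exists u, 0 <= u <= 1 /\ y = h u].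
Proof.
move=> lbv.
have ne : [set y | exists u, 0 <= u <= 1 /\ y = h u] !=set0.
  by exists (h 0); exists 0; rewrite lexx ler01.
by apply: lb_le_inf => // y [u [? ->]]; apply: lbv.
Qed.

End RealLemmas.

Section FStep.
Variables (R : realType) (I : finType) (A : I -> I -> int) (i : I).
Hypothesis Aii : A i i = 2.

Definition agree (p p0 : lspath I R) (g : R -> R) :=
  forall u, 0 <= u <= 1 -> forall k, p u k = p0 u k - g u * sroot R A i k.

Lemma sroot_ii : sroot R A i (inl i) = 2.
Proof. by rewrite /sroot Aii. Qed.

Lemma MLip_mono (H : R -> R) s u : MLip H -> 0 <= s -> s <= u -> u <= 1 -> H s <= H u.
Proof. by move=> [L [_ HL]] s0 su u1; case: (HL s u s0 su u1). Qed.

Lemma min_le (a c : R) : a <= c -> Num.min a c = a.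
Proof. by move=> h; rewrite minEle h. Qed.
Lemma min_ge (a c : R) : c <= a -> Num.min a c = c.
Proof. by move=> h; rewrite minEle; case: leP => // h'; apply/eqP; rewrite eq_le h' h. Qed.

Lemma F_step (p0 p : lspath I R) (j : nat) :
  MLip (hfun i p0) -> hfun i p0 0 = 0 -> j%:R <= hfun i p0 1 ->
  agree p p0 (fun u => Num.min (hfun i p0 u) j%:R) ->
  (hfun i p0 1 < j.+1%:R -> rootf A i p = None) /\
  (j.+1%:R <= hfun i p0 1 -> exists p', rootf A i p = Some p' /\
      agree p' p0 (fun u => Num.min (hfun i p0 u) j.+1%:R)).
Proof.
set H := hfun i p0 => HM H0 Hj Hag.
have hE : forall u, 0 <= u <= 1 -> hfun i p u = H u - 2 * Num.min (H u) j%:R.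
  move=> u u01; rewrite /hfun /pairing Hag // sroot_ii; rewrite /H /hfun /pairing; lra.
have j0 : 0 <= j%:R :> R by rewrite ler0n.
have [/andP[ta0 ta1] Hta] := @sup_right_lem R [set u | 0 <= u <= 1 /\ H u <= j%:R] H j%:R 1
   HM ltac:(by rewrite ler01 lexx) ltac:(by rewrite H0) Hj ltac:(by []).
set ta := sup _ in ta0 ta1 Hta.
have hminE : hmin i p = - j%:R.
  apply: inf_img_eq.
    move=> u u01; rewrite hE //; case: (leP (H u) j%:R) => Hu.
      lra.
    lra.
  exists ta; split; first by rewrite ta0 ta1.
  rewrite hE ?ta0 ?ta1 // Hta min_le //; lra.
have h1E : hfun i p 1 = H 1 - 2 * j%:R by rewrite hE ?ler01 ?lexx // min_ge.
split.
  move=> H1lt; rewrite /rootf hminE h1E.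
  by have -> : H 1 - 2 * j%:R - - j%:R < 1 by rewrite -natr1 in H1lt; lra.
move=> H1ge.
rewrite -natr1 in H1ge.
pose Sq := [set u | 0 <= u <= 1 /\ hfun i p u = - j%:R].
have Sq_H : forall u, Sq u -> 0 <= u <= 1 /\ H u = j%:R.
  move=> u [u01 hu]; split => //; move: hu; rewrite hE //.
  case: (leP (H u) j%:R) => Hu; lra.
have Sq_ta : Sq ta.
  split; first by rewrite ta0 ta1.
  by rewrite hE ?ta0 ?ta1 // Hta min_le //; lra.
have [/andP[q0 q1] Hqle] := @sup_le_lem R Sq H j%:R HM
   ltac:(by move=> u /Sq_H [? ->]; split) ltac:(by exists ta).
have hsq : has_sup Sq by split; [exists ta | exists 1 => u /Sq_H [/andP[_ ?] _]].
have taq : ta <= sup Sq by apply: sup_upper_bound.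
have Hq : H (sup Sq) = j%:R.
  by apply/eqP; rewrite eq_le Hqle /= -Hta; apply: MLip_mono.
have [/andP[tb0 tb1] Htb] := @sup_right_lem R [set u | 0 <= u <= 1 /\ H u <= j%:R + 1] H (j%:R + 1) 1
   HM ltac:(by rewrite ler01 lexx) ltac:(rewrite H0; lra) H1ge ltac:(by []).
set tb := sup [set u | 0 <= u <= 1 /\ H u <= j%:R + 1] in tb0 tb1 Htb.
have qtb : sup Sq <= tb.
  apply: sup_upper_bound.
    split; last by exists 1 => u [/andP[_ ?] _].
    by exists 0; rewrite /= lexx ler01 H0; split => //; lra.
  by split; [apply/andP | rewrite Hq; lra].
pose Sx := [set u | sup Sq <= u <= 1 /\ hfun i p u = - j%:R + 1].
have Sx_H : forall u, Sx u -> 0 <= u <= 1 /\ sup Sq <= u /\ H u = j%:R + 1.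
  move=> u [/andP[qu u1] hu].
  have u01 : 0 <= u <= 1 by rewrite u1 (le_trans q0 qu).
  have Hu : j%:R <= H u by rewrite -Hq; apply: MLip_mono.
  split => //; split => //; move: hu; rewrite hE // min_ge //; lra.
have Sx_tb : Sx tb.
  by split; [rewrite qtb tb1 | rewrite hE ?tb0 ?tb1 // Htb min_ge; lra].
have [/andP[x0 x1] Hxge] := @inf_ge_lem R Sx H (j%:R + 1) HM
   ltac:(by move=> u /Sx_H [? [_ ->]]; split) ltac:(by exists tb).
have hix : has_lbound Sx by exists 0 => u /Sx_H [/andP[? _] _].
have xtb : inf Sx <= tb by apply: ge_inf.
have qx : sup Sq <= inf Sx by apply: lb_le_inf; [exists tb | move=> u /Sx_H [_ [? _]]].
have Hx : H (inf Sx) = j%:R + 1.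
  by apply/eqP; rewrite eq_le Hxge andbT -Htb; apply: MLip_mono.
rewrite /rootf hminE h1E.
have -> : (H 1 - 2 * j%:R - - j%:R < 1) = false by apply/negbTE; rewrite -leNgt; lra.
rewrite -/Sq -/Sx.
eexists; split; first reflexivity.
move=> u u01 k; rewrite -natr1.
have /andP[u0 u1] := u01.
have [uq|qu] := leP u (sup Sq).
  have Hu : H u <= j%:R by rewrite -Hq; apply: MLip_mono.
  rewrite Hag // !min_le //; lra.
have [ux|xu] := leP u (inf Sx).
  have Hu1 : j%:R <= H u by rewrite -Hq; apply: MLip_mono => //; lra.
  have Hu2 : H u <= j%:R + 1 by rewrite -Hx; apply: MLip_mono.
  rewrite (min_le Hu2) /wadd /sreflect /wsub /pairing !Hag ?q0 ?q1 //.
  rewrite (min_ge Hu1) Hq minxx sroot_ii.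
  rewrite /H /hfun /pairing in Hq Hu1 Hu2 *.
  rewrite Hq; ring.
have Hu : j%:R + 1 <= H u by rewrite -Hx; apply: MLip_mono => //; lra.
rewrite /wsub Hag // !min_ge //; [ring | lra].
Qed.

End FStep.

Lemma minE2 (R : realType) (x y : R) : (Num.min x y = x /\ x <= y) \/ (Num.min x y = y /\ y <= x).
Proof. by case: (leP x y) => h; [left | right; split => //; apply: ltW]. Qed.

Ltac mincase := repeat match goal with |- context [Num.min ?x ?y] =>
  case: (minE2 x y) => [[-> ?]|[-> ?]] end.

Section FE.
Variables (R : realType) (I : finType) (A : I -> I -> int) (i : I).
Hypothesis Aii : A i i = 2.

Lemma F_pow (p0 : lspath I R) : MLip (hfun i p0) -> hfun i p0 0 = 0 ->
  forall j : nat,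
  (j%:R <= hfun i p0 1 -> exists p, fpow A i j (Some p0) = Some p /\
      agree A i p p0 (fun u => Num.min (hfun i p0 u) j%:R)) /\
  (hfun i p0 1 < j%:R -> fpow A i j (Some p0) = None).
Proof.
move=> HM H0; elim=> [|j [IH1 IH2]].
  split.
    move=> _; exists p0; split => // u /andP[u0 u1] k.
    have Hu : 0 <= hfun i p0 u by rewrite -H0; apply: MLip_mono.
    by rewrite min_ge // mul0r subr0.
  have : 0 <= hfun i p0 1 by rewrite -H0; apply: MLip_mono => //; rewrite ler01.
  by move=> h1 h2; exfalso; lra.
have SjE : forall o, fpow A i j.+1 o = obind (rootf A i) (fpow A i j o) by [].
split.
  move=> hle.
  have hj : j%:R <= hfun i p0 1 by apply: le_trans hle; rewrite ler_nat.
  have [p [Hfp Hp]] := IH1 hj.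
  have [_ S2] := F_step Aii HM H0 hj Hp.
  by rewrite SjE Hfp /=; apply: S2.
move=> hlt; rewrite SjE.
have [hj|hj] := leP (j%:R) (hfun i p0 1).
  have [p [-> Hp]] := IH1 hj.
  have [S1 _] := F_step Aii HM H0 hj Hp.
  by rewrite /=; apply: S1.
by rewrite IH2.
Qed.

Lemma F_use (p0 x : lspath I R) (n : nat) : MLip (hfun i p0) -> hfun i p0 0 = 0 ->
  fpow A i n (Some p0) = Some x ->
  n%:R <= hfun i p0 1 /\ agree A i x p0 (fun u => Num.min (hfun i p0 u) n%:R).
Proof.
move=> HM H0 Hx; have [S1 S2] := F_pow HM H0 n.
have [hn|hn] := leP (n%:R) (hfun i p0 1); last by rewrite S2 in Hx.
by have [p [Hp Hag]] := S1 hn; split => //; rewrite Hx in Hp; case: Hp => ->.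
Qed.

Variables (Q : lspath I R) (H G : R -> R) (b B : nat).
Hypotheses (HM : MLip H) (H0 : H 0 = 0) (Hb1 : b%:R <= H 1)
  (hQ : forall u, 0 <= u <= 1 -> Q u (inl i) = H u + G u)
  (Gub : forall u, 0 <= u <= 1 -> G u <= B%:R)
  (Glb : forall u, 0 <= u <= 1 -> Num.min (Num.min (H u) b%:R) B%:R <= G u).

Lemma hP (P : lspath I R) (c : R) : agree A i P Q (fun u => Num.min (H u) c) ->
  forall u, 0 <= u <= 1 -> hfun i P u = H u + G u - 2 * Num.min (H u) c.
Proof. by move=> Hag u u01; rewrite /hfun /pairing Hag // sroot_ii // hQ //; lra. Qed.

Lemma E_none (P : lspath I R) (c : nat) : (c <= b)%N -> (c <= B)%N ->
  agree A i P Q (fun u => Num.min (H u) c%:R) -> roote A i P = None.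
Proof.
move=> cb cB Hag.
have cbR : c%:R <= b%:R :> R by rewrite ler_nat.
have cBR : c%:R <= B%:R :> R by rewrite ler_nat.
have : 0 <= hmin i P.
  apply: inf_img_ge => u u01; rewrite (hP Hag) //.
  have := Glb u01.
  mincase; lra.
move=> hm; rewrite /roote.
by have -> : -1 < hmin i P by lra.
Qed.

Lemma E_some (P : lspath I R) (n : nat) : (B <= n)%N -> (n < b)%N ->
  agree A i P Q (fun u => Num.min (H u) n.+1%:R) ->
  exists P', roote A i P = Some P' /\ agree A i P' Q (fun u => Num.min (H u) n%:R).
Proof.
move=> Bn nb Hag.
have BnR : B%:R <= n%:R :> R by rewrite ler_nat.
have nbR : n%:R + 1 <= b%:R :> R by rewrite natr1 ler_nat.
have n0 : 0 <= n%:R :> R by rewrite ler0n.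
have B0 : 0 <= B%:R :> R by rewrite ler0n.
have hE := hP Hag; rewrite -[n.+1%:R]natr1 in hE.
have G_eqB : forall u, 0 <= u <= 1 -> B%:R <= H u -> G u = B%:R.
  move=> u u01 HBu; apply/eqP; rewrite eq_le Gub //=.
  have := Glb u01; mincase; lra.
have C1 : forall u, 0 <= u <= 1 -> B%:R - (n%:R + 1) <= hfun i P u.
  move=> u u01; rewrite hE //; have := Glb u01; have := Gub u01.
  mincase; lra.
have C2 : forall u, 0 <= u <= 1 -> H u = n%:R + 1 -> hfun i P u = B%:R - (n%:R + 1).
  move=> u u01 Hu; rewrite hE // (G_eqB u u01); last lra.
  rewrite Hu minxx; lra.
have C3 : forall u, 0 <= u <= 1 -> hfun i P u = B%:R - (n%:R + 1) -> H u = n%:R + 1.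
  move=> u u01; rewrite hE //; have := Glb u01; have := Gub u01.
  mincase; lra.
have [/andP[ta0 ta1] Hta] := @sup_right_lem R [set u | 0 <= u <= 1 /\ H u <= n%:R + 1] H
   (n%:R + 1) 1 HM ltac:(by rewrite ler01 lexx) ltac:(rewrite H0; lra) (le_trans nbR Hb1) ltac:(by []).
set ta := sup _ in ta0 ta1 Hta.
have hminE : hmin i P = B%:R - (n%:R + 1).
  apply: inf_img_eq; first exact: C1.
  by exists ta; split; [rewrite ta0 ta1 | rewrite C2 ?ta0 ?ta1].
rewrite /roote hminE.
have -> : (-1 < B%:R - (n%:R + 1) :> R) = false by apply/negbTE; rewrite -leNgt; lra.
pose S1 := [set u | 0 <= u <= 1 /\ hfun i P u = B%:R - (n%:R + 1)].
have S1_ta : S1 ta by split; [rewrite ta0 ta1 | rewrite C2 ?ta0 ?ta1].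
have [/andP[t10 t11] Ht1ge] := @inf_ge_lem R S1 H (n%:R + 1) HM
   ltac:(by move=> u [u01 hu]; split => //; rewrite C3 //) ltac:(by exists ta).
have t1ta : inf S1 <= ta by apply: ge_inf => //; exists 0 => u [/andP[? _] _].
have Ht1 : H (inf S1) = n%:R + 1.
  by apply/eqP; rewrite eq_le Ht1ge andbT -Hta; apply: MLip_mono.
rewrite -/S1.
pose S0 := [set u | 0 <= u <= inf S1 /\ B%:R - (n%:R + 1) + 1 <= hfun i P u].
have S0E : forall u, S0 u <-> (0 <= u <= inf S1 /\ H u <= n%:R).
  move=> u; have [u0|u0] := leP 0 u; last first.
    by split => -[/andP[h _] _]; move: h; rewrite ?leNgt ?u0.
  have [ut1|ut1] := leP u (inf S1); last first.
    by split => -[/andP[_ h] _]; move: h; rewrite ?leNgt ?ut1.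
  have u01 : 0 <= u <= 1 by rewrite u0 (le_trans ut1 t11).
  have Hut1 : H u <= n%:R + 1 by rewrite -Ht1; apply: MLip_mono.
  rewrite /S0 /= u0 ut1; split => -[_ hh]; split => //; move: hh; rewrite hE //;
  have := Glb u01; have := Gub u01;
  mincase; lra.
have [/andP[t00 t0t1] Ht0] := @sup_right_lem R S0 H n%:R (inf S1) HM
   ltac:(by rewrite t10 t11) ltac:(by rewrite H0 ler0n) ltac:(rewrite Ht1; lra) S0E.
rewrite -/S0.
eexists; split; first reflexivity.
move=> u u01 k; have /andP[u0 u1] := u01.
have [ut0|t0u] := leP u (sup S0).
  have Hu : H u <= n%:R by rewrite -Ht0; apply: MLip_mono => //; lra.
  by rewrite Hag // !min_le //; lra.
have [ut1|t1u] := leP u (inf S1).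
  have Hu1 : n%:R <= H u by rewrite -Ht0; apply: MLip_mono => //; lra.
  have Hu2 : H u <= n%:R + 1 by rewrite -Ht1; apply: MLip_mono => //; lra.
  have t001 : 0 <= sup S0 <= 1 by rewrite t00 (le_trans t0t1 t11).
  rewrite (min_ge Hu1) /wadd /sreflect /wsub /pairing !Hag //.
  rewrite -[n.+1%:R]natr1 (min_le Hu2) Ht0 (min_le (_ : n%:R <= n%:R + 1)); last lra.
  rewrite sroot_ii // !hQ // (G_eqB u u01) ?(G_eqB _ t001) ?Ht0 //; last lra.
  ring.
have Hu : n%:R + 1 <= H u by rewrite -Ht1; apply: MLip_mono => //; lra.
rewrite /wadd Hag // -[n.+1%:R]natr1 (min_ge Hu) (min_ge (_ : n%:R <= H u)); [ring | lra].
Qed.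

Lemma E_eps : forall (j : nat) (P : lspath I R), (B + j <= b)%N ->
  agree A i P Q (fun u => Num.min (H u) (B + j)%:R) -> epsilon_is A i P j.
Proof.
elim=> [|j IH] P Bj Hag.
  rewrite addn0 in Hag Bj.
  exists 0%N; split => //; split => //.
  by rewrite /epow /= (E_none Bj (leqnn B) Hag).
have Bj' : (B + j < b)%N by rewrite -addnS.
have Hag2 : agree A i P Q (fun u => Num.min (H u) (B + j).+1%:R) by rewrite -addnS.
have [P' [HP' Hag']] := @E_some P (B + j) (leq_addr _ _) Bj' Hag2.
have [n [nE [Hn1 Hn2]]] := IH P' (ltnW Bj') Hag'.
move: nE => /eqP; rewrite eqz_nat => /eqP nE; subst n.
exists j.+1; split => //; split; rewrite /epow iterSr /= HP'; [exact: Hn1 | exact: Hn2].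
Qed.

End FE.

Section MLipLemmas.
Variable R : realType.

Lemma MLip_ext (f g : R -> R) : MLip f -> (forall u, 0 <= u <= 1 -> f u = g u) -> MLip g.
Proof.
move=> [L [L0 HL]] E; exists L; split => // s u s0 su u1.
have s01 : 0 <= s <= 1 by rewrite s0 (le_trans su u1).
have u01 : 0 <= u <= 1 by rewrite u1 (le_trans s0 su).
by rewrite -!E //; apply: HL.
Qed.

Lemma MLip_lin (c : R) : 0 <= c -> MLip (fun u => c * u).
Proof.
move=> c0; exists c; split => // s u s0 su u1; split.
  by apply: ler_wpM2l.
by rewrite mulrBr lexx.
Qed.

Lemma MLip_cst (c : R) : MLip (fun _ => c).
Proof. by exists 0; split => // s u _ _ _; rewrite subrr mul0r lexx. Qed.

Lemma MLip_add (f g : R -> R) : MLip f -> MLip g -> MLip (fun u => f u + g u).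
Proof.
move=> [L [L0 HL]] [M [M0 HM]]; exists (L + M); split; first lra.
move=> s u s0 su u1; have := HL s u s0 su u1; have := HM s u s0 su u1; lra.
Qed.

Lemma MLip_scale (c : R) (f : R -> R) : 0 <= c -> MLip f -> MLip (fun u => c * f u).
Proof.
move=> c0 [L [L0 HL]]; exists (c * L); split; first exact: mulr_ge0.
move=> s u s0 su u1; have [h1 h2] := HL s u s0 su u1; split.
  by apply: ler_wpM2l.
rewrite -mulrBr -mulrA; apply: ler_wpM2l => //.
Qed.

Lemma MLip_min (f : R -> R) (c : R) : MLip f -> MLip (fun u => Num.min (f u) c).
Proof.
move=> [L [L0 HL]]; exists L; split => // s u s0 su u1.
have [h1 h2] := HL s u s0 su u1.
have := minE2 (f s) c; have := minE2 (f u) c.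
have : 0 <= L * (u - s) by apply: mulr_ge0 => //; lra.
move=> h3 [[e1 f1]|[e1 f1]] [[e2 f2]|[e2 f2]]; split; lra.
Qed.

Lemma MLip_sum (T : eqType) (l : seq T) (P : pred T) (c : T -> R) (f : T -> R -> R) :
  (forall s, s \in l -> P s -> 0 <= c s /\ MLip (f s)) ->
  MLip (fun u => \sum_(s <- l | P s) c s * f s u).
Proof.
elim: l => [|a l IH] H.
  by apply: (MLip_ext (MLip_cst 0)) => u _; rewrite big_nil.
have IH' : MLip (fun u => \sum_(s <- l | P s) c s * f s u).
  by apply: IH => s sl Ps; apply: H => //; rewrite inE sl orbT.
case Pa: (P a).
  have [ca fa] := H a (mem_head _ _) Pa.
  apply: (MLip_ext (MLip_add (MLip_scale ca fa) IH')) => u _.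
  by rewrite big_cons Pa.
by apply: (MLip_ext IH') => u _; rewrite big_cons Pa.
Qed.

Lemma min_add3 (v x y fx fy : R) : 0 <= v -> 0 <= x -> 0 <= y ->
  Num.min v x <= fx -> Num.min v y <= fy -> Num.min v (x + y) <= fx + fy.
Proof.
move=> v0 x0 y0.
have := minE2 v (x + y); have := minE2 v x; have := minE2 v y.
move=> [[e1 f1]|[e1 f1]] [[e2 f2]|[e2 f2]] [[e3 f3]|[e3 f3]]; rewrite e1 e2 e3; lra.
Qed.

Lemma sum_min (T : eqType) (l : seq T) (P : pred T) (F Bf : T -> R) (v : R) :
  0 <= v -> (forall s, s \in l -> P s -> 0 <= Bf s /\ Num.min v (Bf s) <= F s) ->
  Num.min v (\sum_(s <- l | P s) Bf s) <= \sum_(s <- l | P s) F s.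
Proof.
move=> v0; elim: l => [|a l IH] H.
  rewrite !big_nil; have := minE2 v 0 => -[[e f]|[e f]]; lra.
have IH' := IH (fun s sl Ps => H s ltac:(by rewrite inE sl orbT) Ps).
have Bge : 0 <= \sum_(s <- l | P s) Bf s.
  rewrite big_seq_cond; apply: sumr_ge0 => s /andP[sl Ps].
  by have [] := H s ltac:(by rewrite inE sl orbT) Ps.
rewrite !big_cons; case Pa: (P a) => //.
have [ba fa] := H a (mem_head _ _) Pa.
exact: min_add3.
Qed.

End MLipLemmas.

Lemma natz_sum (T : eqType) (l : seq T) (P : pred T) (f : T -> nat) :
  ((\sum_(s <- l | P s) f s)%N)%:Z = \sum_(s <- l | P s) (f s)%:Z.
Proof.
elim: l => [|a l IH]; first by rewrite !big_nil.
by rewrite !big_cons; case: (P a); rewrite ?PoszD IH.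
Qed.

Section Main.
Variables (R : realType) (I : finType) (A : I -> I -> int)
  (lam : I -> nat) (t : nat) (ii : 'I_t -> I) (b : 'I_t -> nat).
Hypothesis GCM : simply_laced_symmetrizable_GCM A.
Hypothesis inj : injective ii.

Lemma A_diag i : A i i = 2.
Proof. by case: GCM. Qed.

Lemma A_off i j : i != j -> A i j = 0 \/ A i j = -1.
Proof. by case: GCM => _ h _ _; apply: h. Qed.

Lemma A_sym i j : i != j -> A i j = A j i.
Proof.
move=> ij; case: GCM => _ h1 h2 _.
have ji : j != i by rewrite eq_sym.
case: (h1 _ _ ij) => e1; case: (h1 _ _ ji) => e2; rewrite e1 e2 //.
  by move: (h2 _ _ e1); rewrite e2.
by move: (h2 _ _ e2); rewrite e1.
Qed.

Lemma A_le0 i j : i != j -> (A i j)%:~R <= 0 :> R.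
Proof. by move=> ij; case: (A_off ij) => ->; rewrite ?mulr0z ?lexx // ?mulrNz ?mulr1z ?oppr_le0 ?ler01. Qed.

Lemma ii_neq r s : r != s -> ii r != ii s.
Proof. by apply: contraNneq => /inj ->. Qed.

Definition Hb (l : seq 'I_t) (g : 'I_t -> R -> R) (s : 'I_t) (u : R) : R :=
  (lam (ii s))%:R * u - \sum_(s' <- l | (s < s')%N) (A (ii s) (ii s'))%:~R * g s' u.

Definition Inv (l : seq 'I_t) (p : lspath I R) (g : 'I_t -> R -> R) :=
  (forall u, 0 <= u <= 1 -> forall k,
      p u k = @pi_hw I R lam u k - \sum_(s <- l) g s u * sroot R A (ii s) k) /\
  (forall s, s \in l -> [/\ MLip (Hb l g s), Hb l g s 0 = 0, (b s)%:R <= Hb l g s 1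
       & forall u, g s u = Num.min (Hb l g s u) (b s)%:R]).

Lemma g_props l p g s : Inv l p g -> s \in l ->
  [/\ MLip (g s), g s 0 = 0 & forall u, 0 <= u <= 1 -> 0 <= g s u <= (b s)%:R].
Proof.
move=> [_ H] sl; have [HM H0 H1 gE] := H s sl.
split.
- by apply: (MLip_ext (MLip_min (b s)%:R HM)) => u _; rewrite gE.
- by rewrite gE H0 min_le // ler0n.
- move=> u /andP[u0 u1]; rewrite gE.
  have : 0 <= Hb l g s u by rewrite -H0; apply: MLip_mono.
  have := minE2 (Hb l g s u) (b s)%:R; have : 0 <= (b s)%:R :> R by rewrite ler0n.
  by move=> ? [[-> ?]|[-> ?]] ?; apply/andP; split; lra.
Qed.

Lemma Inv_cons l p g (r : 'I_t) (x : lspath I R) : Inv l p g -> (forall s, s \in l -> (r < s)%N) ->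
  fpow A (ii r) (b r) (Some p) = Some x ->
  Inv (r :: l) x (fun s => if s == r then (fun u => Num.min (Hb (r :: l) g r u) (b r)%:R) else g s).
Proof.
move=> HI rl Hf.
set g' := fun s => if s == r then _ else _.
have rnl : r \notin l by apply/negP => /rl; rewrite ltnn.
have g'l : forall s, s \in l -> g' s = g s.
  by move=> s sl; rewrite /g'; case: eqP => // esr; move: rnl; rewrite -esr sl.
have sumE : forall (P : pred 'I_t) (F : 'I_t -> (R -> R) -> R),
    \sum_(s <- l | P s) F s (g' s) = \sum_(s <- l | P s) F s (g s).
  by move=> P F; rewrite big_seq_cond [RHS]big_seq_cond; apply: eq_bigr => s /andP[sl _]; rewrite g'l.
have Hb_l : forall s, s \in l -> forall u, Hb (r :: l) g' s u = Hb l g s u.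
  move=> s sl u; rewrite /Hb big_cons.
  have -> : (s < r)%N = false by apply/negbTE; rewrite -leqNgt ltnW // rl.
  by rewrite (sumE (fun s' => (s < s')%N) (fun s' f => (A (ii s) (ii s'))%:~R * f u)).
have Hb_r : forall u, Hb (r :: l) g' r u = Hb (r :: l) g r u.
  move=> u; rewrite /Hb !big_cons ltnn.
  by rewrite (sumE (fun s' => (r < s')%N) (fun s' f => (A (ii r) (ii s'))%:~R * f u)).
have Hb_rE : forall u, Hb (r :: l) g r u =
    (lam (ii r))%:R * u + \sum_(s <- l) (- (A (ii r) (ii s))%:~R) * g s u.
  move=> u; rewrite /Hb big_cons ltnn big_seq_cond [in RHS]big_seq.
  rewrite (eq_bigl (fun s => s \in l)); last by move=> s; case sl: (s \in l) => //=; apply: rl.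
  by rewrite -sumrN; congr (_ + _); apply: eq_bigr => s _; rewrite mulNr.
have hfE : forall u, 0 <= u <= 1 -> hfun (ii r) p u = Hb (r :: l) g r u.
  move=> u u01; rewrite Hb_rE /hfun /pairing (proj1 HI) // /pi_hw /sroot.
  rewrite mulrC -sumrN; congr (_ + _); rewrite !big_seq; apply: eq_bigr => s sl.
  by rewrite mulNr mulrC.
have HMr : MLip (Hb (r :: l) g r).
  apply: (MLip_ext (MLip_add (MLip_lin (ler0n _ (lam (ii r)))) (MLip_sum (P := predT)
     (c := fun s => - (A (ii r) (ii s))%:~R) (f := g) (l := l) _))) => [s sl _|u _].
    split; first by rewrite oppr_ge0 A_le0 // ii_neq //; apply/negP => /eqP ers; move: rnl; rewrite ers sl.
    by have [] := g_props HI sl.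
  by rewrite Hb_rE.
have H0r : Hb (r :: l) g r 0 = 0.
  rewrite Hb_rE mulr0 add0r big_seq big1 // => s sl.
  by have [_ -> _] := g_props HI sl; rewrite mulr0.
have [hb1 Hag] := F_use (A_diag (ii r)) (MLip_ext HMr (fun u u01 => esym (hfE u u01)))
   ltac:(by rewrite hfE ?lexx ?ler01) Hf.
split.
  move=> u u01 k; rewrite Hag // (proj1 HI) // big_cons /g' eqxx hfE //.
  rewrite (sumE predT (fun s f => f u * sroot R A (ii s) k)); ring.
move=> s; rewrite inE => /orP[/eqP ->|sl].
  rewrite /g' eqxx; split => //; last by move=> u; rewrite Hb_r.
  - by apply: (MLip_ext HMr) => u _; rewrite Hb_r.
  - by rewrite Hb_r.
  - by rewrite Hb_r -hfE // ?lexx ?ler01.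
have [HM1 H01 H11 gE] := (proj2 HI) s sl.
rewrite g'l //; split.
- by apply: (MLip_ext HM1) => u _; rewrite Hb_l.
- by rewrite Hb_l.
- by rewrite Hb_l.
- by move=> u; rewrite Hb_l.
Qed.

Lemma fpow_None i n : fpow A i n (None : option (lspath I R)) = None.
Proof. by elim: n => //= n ->. Qed.

Lemma Inv_fold (l : seq 'I_t) (x : lspath I R) :
  sorted (fun a b : 'I_t => (a < b)%N) l ->
  foldr (fun r o => fpow A (ii r) (b r) o) (Some (@pi_hw I R lam)) l = Some x ->
  exists g, Inv l x g.
Proof.
elim: l x => [|r l IH] x /=.
  move=> _ [<-]; exists (fun _ _ => 0); split => // u _ k.
  by rewrite big_nil subr0.
move=> Hp Hf.
have tr : transitive (fun a b : 'I_t => (a < b)%N) by move=> y z w; apply: ltn_trans.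
have Hs := path_sorted Hp.
have /allP Hall := order_path_min tr Hp.
case Ep: (foldr _ _ l) Hf => [p|]; last by rewrite fpow_None.
move=> Hf; have [g Hg] := IH p Hs Ep.
by eexists; apply: (Inv_cons Hg) => // s sl; apply: Hall.
Qed.

Lemma min_mono (x y c : R) : x <= y -> Num.min x c <= Num.min y c.
Proof.
have := minE2 x c; have := minE2 y c.
by move=> [[-> ?]|[-> ?]] [[-> ?]|[-> ?]] ?; lra.
Qed.

End Main.

Unset Implicit Arguments. Set Strict Implicit.
Local Close Scope classical_set_scope.

Lemma ord_split (t : nat) (r s : 'I_t) :
  ((s != r) && (r < s)%N = (r < s)%N) /\ ((s != r) && ~~ (r < s)%N = (s < r)%N).
Proof.
have [e|ne] := eqVneq s r.
  by rewrite e ltnn.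
rewrite /=; split => //.
by rewrite ltn_neqAle neq_ltn andbC; case: ltngtP => // h; move: ne; rewrite (val_inj h) eqxx.
Qed.

Theorem mainTheorem4 (R : realType) (I : finType) (A : I -> I -> int)
  (lam : I -> nat) (t : nat) (ii : 'I_t -> I) (b : 'I_t -> nat)
  (x : lspath I R) :
  simply_laced_symmetrizable_GCM A ->
  injective ii ->
  monomial R A lam ii b = Some x ->
  (forall r : 'I_t,
     epsilon_is A (ii r) x
       (Num.max 0 ((b r)%:Z + \sum_(s < t | (s < r)%N) (b s)%:Z * A (ii s) (ii r))))
  /\ (forall j : I, (forall r : 'I_t, ii r != j) -> epsilon_is A j x 0).
Proof.
move=> GCM inj Hm.
have srt : sorted (fun a b : 'I_t => (a < b)%N) (enum 'I_t).
  by have := iota_ltn_sorted 0 t; rewrite -val_enum_ord sorted_map.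
have [g HI] := Inv_fold GCM inj srt Hm.
have memr : forall s : 'I_t, s \in enum 'I_t by move=> s; rewrite mem_enum.
have gP := fun s => g_props HI (memr s).
split; last first.
  move=> j hj; exists 0%N; split => //; split => //.
  rewrite /epow /= /roote.
  have : 0 <= hmin j x.
    apply: inf_img_ge => u u01; rewrite /hfun /pairing (proj1 HI) // /pi_hw /sroot.
    have : \sum_(s <- enum 'I_t) g s u * (A j (ii s))%:~R <= 0.
      apply: sumr_le0 => s _; apply: mulr_ge0_le0.
        by have [_ _ /(_ u u01) /andP[]] := gP s.
      by apply: A_le0 => //; rewrite eq_sym.
    have : 0 <= u * (lam j)%:R by apply: mulr_ge0; [case/andP: u01|rewrite ler0n].
    lra.
  by move=> hm; rewrite (_ : -1 < hmin j x) //; lra.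
move=> r; set i := ii r.
pose l := enum 'I_t.
pose Q := fun u k => @pi_hw I R lam u k - \sum_(s <- l | s != r) g s u * sroot R A (ii s) k.
pose H := Hb A lam ii l g r.
pose G := fun u => \sum_(s <- l | (s < r)%N) (- (A i (ii s))%:~R) * g s u.
pose w := fun s => nat_of_bool (A i (ii s) != 0).
pose Bn := (\sum_(s <- l | (s < r)%N) (b s * w s))%N.
have [HM H0 H1 gE] := (proj2 HI) r (memr r).
have Aii : A i i = 2 by apply: A_diag.
have Hag : agree A i x Q (fun u => Num.min (H u) (b r)%:R).
  move=> u u01 k; rewrite (proj1 HI) // (bigD1_seq r (memr r) (enum_uniq _)) /= gE /Q.
  rewrite /H /l; ring.
have hQ : forall u, 0 <= u <= 1 -> Q u (inl i) = H u + G u.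
  move=> u u01; rewrite /Q /H /G /Hb /pi_hw /sroot.
  rewrite (bigID (fun s : 'I_t => (r < s)%N)) /=.
  rewrite (eq_bigl (fun s : 'I_t => (r < s)%N)); last by move=> s; case: (@ord_split _ r s).
  rewrite [X in _ - (_ + X)](eq_bigl (fun s : 'I_t => (s < r)%N)); last by move=> s; case: (@ord_split _ r s).
  have E1 : \sum_(s <- l | (r < s)%N) g s u * (A i (ii s))%:~R =
            \sum_(s <- l | (r < s)%N) (A i (ii s))%:~R * g s u by apply: eq_bigr => s _; rewrite mulrC.
  have E2 : \sum_(s <- l | (s < r)%N) g s u * (A i (ii s))%:~R =
            - \sum_(s <- l | (s < r)%N) (- (A i (ii s))%:~R) * g s u.
    by rewrite -sumrN; apply: eq_bigr => s _; rewrite mulNr opprK mulrC.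
  rewrite E1 E2 /i; ring.
have snr : forall s : 'I_t, (s < r)%N -> s != r.
  by move=> s h; apply/eqP => e; rewrite e ltnn in h.
have rns : forall s : 'I_t, (s < r)%N -> r != s by move=> s h; rewrite eq_sym snr.
have Gub : forall u, 0 <= u <= 1 -> G u <= Bn%:R.
  move=> u u01; rewrite /Bn natr_sum; apply: ler_sum => s sr.
  have [_ _ /(_ u u01) /andP[g0 gb]] := gP s.
  rewrite /w; case: (A_off GCM (ii_neq inj (rns s sr))) => ->.
    by rewrite eqxx muln0 mulr0z oppr0 mul0r.
  by rewrite muln1 mulrNz mulr1z opprK mul1r.
have Glb : forall u, 0 <= u <= 1 -> Num.min (Num.min (H u) (b r)%:R) Bn%:R <= G u.
  move=> u u01; rewrite -gE /Bn natr_sum.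
  have [_ _ /(_ u u01) /andP[gr0 grb]] := gP r.
  apply: sum_min => // s _ sr.
  split; first by rewrite ler0n.
  have [_ _ /(_ u u01) /andP[gs0 gsb]] := gP s.
  rewrite /w; case: (A_off GCM (ii_neq inj (rns s sr))) => Ae; rewrite Ae.
    by rewrite eqxx muln0 mulr0z oppr0 mul0r min_ge.
  rewrite muln1 mulrNz mulr1z opprK mul1r.
  have [_ _ _ gEs] := (proj2 HI) s (memr s).
  rewrite gEs; apply: min_mono.
  rewrite /Hb big_mkcond (bigD1_seq r (memr r) (enum_uniq _)) /= sr.
  have As : A (ii s) (ii r) = -1 by rewrite (A_sym GCM (ii_neq inj (snr s sr))) -/i Ae.
  rewrite As mulrNz mulr1z mulN1r.
  have : \sum_(s' <- enum 'I_t | s' != r)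
      (if (s < s')%N then (A (ii s) (ii s'))%:~R * g s' u else 0) <= 0.
    apply: sumr_le0 => s' _; case: ifP => // ss'.
    have ns : ii s != ii s' by apply: (ii_neq inj); apply/eqP => e; rewrite e ltnn in ss'.
    have [_ _ /(_ u u01) /andP[gs0' _]] := gP s'.
    by apply: mulr_le0_ge0 => //; apply: A_le0.
  have : 0 <= (lam (ii s))%:R * u by apply: mulr_ge0; [rewrite ler0n|case/andP: u01].
  lra.
have Sint : \sum_(s < t | (s < r)%N) (b s)%:Z * A (ii s) (ii r) = - (Bn%:Z).
  have -> : \sum_(s < t | (s < r)%N) (b s)%:Z * A (ii s) (ii r) =
     \sum_(s <- enum 'I_t | (s < r)%N) (b s)%:Z * A (ii s) (ii r) by rewrite big_enum_cond.
  rewrite /Bn natz_sum -sumrN; apply: eq_bigr => s sr.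
  rewrite (A_sym GCM (ii_neq inj (snr s sr))) -/i /w.
  by case: (A_off GCM (ii_neq inj (rns s sr))) => ->; rewrite ?eqxx /= ?muln0 ?muln1 ?mulr0 ?mulrN1.
rewrite Sint.
have [hb|hb] := leqP (b r) Bn.
  have -> : Num.max 0 ((b r)%:Z + - Bn%:Z) = 0.
    by apply/max_idPl; rewrite subr_le0 lez_nat.
  exists 0%N; split => //; split => //.
  by rewrite /epow /= (E_none Aii hQ Glb (leqnn (b r)) hb Hag).
have -> : Num.max 0 ((b r)%:Z + - Bn%:Z) = ((b r - Bn)%N)%:Z.
  by rewrite subzn ?(ltnW hb) //; apply/max_idPr.
apply: (E_eps Aii HM H0 H1 hQ Gub Glb (j := (b r - Bn)%N)); first by rewrite subnKC // ltnW.
by rewrite subnKC // ltnW.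
Qed.
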